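(* Let $p$ be a prime. If there exists $A\subseteq\mathbb{F}_p$ with $A-A\doteq\mathcal{R}_p$, then for every prime $q$ dividing $\frac{p-1}{4}$, the multiplicative order $\operatorname{ord}_p(q)$ of $q$ modulo $p$ is odd.
   Context: $\mathcal{R}_p$ is the set of nonzero quadratic residues modulo $p$. $A-A\doteq S$ means: every element of $S$ has exactly one representation as $a'-a''$ with $a',a''\in A$, and every difference $a'-a''$ with $a'\ne a''$ in $A$ lies in $S$. (Such $A$ forces $p\equiv 1\pmod 4$ and $p=2|A|(|A|-1)+1$.) *)

(* Defs.v *)
From HB Require Import structures.
From mathcomp Require Import all_boot all_order all_algebra.
Set Implicit Arguments. Unset Strict Implicit. Unset Printing Implicit Defensive.
Import GRing.Theory.
Local Open Scope ring_scope.

Definition QR (p : nat) : {set 'F_p} :=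
  [set x : 'F_p | (x != 0) && [exists y : 'F_p, y * y == x]].

Definition perfect_diff (p : nat) (A S : {set 'F_p}) : Prop :=
  (forall s, s \in S ->
     #|[set xy : 'F_p * 'F_p | [&& xy.1 \in A, xy.2 \in A & xy.1 - xy.2 == s]]| = 1%N)
  /\ (forall a1 a2, a1 \in A -> a2 \in A -> a1 != a2 -> a1 - a2 \in S).

Definition is_mult_order (p q k : nat) : Prop :=
  [/\ (0 < k)%N, (q ^ k = 1 %[mod p])%N &
      forall j : nat, (0 < j)%N -> (q ^ j = 1 %[mod p])%N -> (k <= j)%N].

(* Main.v *)
Require Import Defs.
From HB Require Import structures.
From mathcomp Require Import all_boot all_order all_algebra all_solvable all_field.
From mathcomp Require Import ring zify.
Set Implicit Arguments. Unset Strict Implicit. Unset Printing Implicit Defensive.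
Import GRing.Theory.
Local Open Scope ring_scope.

Section Comb.
Variable p : nat.
Hypothesis pr_p : prime p.
Local Notation F := 'F_p.
Local Notation R := (QR p).

Lemma QR_neq0 x : x \in R -> x != 0.
Proof. by rewrite inE => /andP[]. Qed.

Lemma QRP x : reflect (x != 0 /\ exists y : F, y * y = x) (x \in R).
Proof.
rewrite inE; apply: (iffP andP) => [[-> /existsP[y /eqP <-]]|[-> [y <-]]].
  by split=> //; exists y.
by split=> //; apply/existsP; exists y.
Qed.

Lemma QR_mul x y : x \in R -> y \in R -> x * y \in R.
Proof.
move=> /QRP[x0 [u xu]] /QRP[y0 [v yv]]; apply/QRP; split.
  by rewrite mulf_neq0.
by exists (u * v); rewrite -xu -yv; ring.
Qed.

Lemma QR_inv x : x \in R -> x^-1 \in R.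
Proof.
move=> /QRP[x0 [u xu]]; apply/QRP; split; first by rewrite invr_eq0.
by exists u^-1; rewrite -xu invfM.
Qed.

Lemma QR1 : 1 \in R.
Proof. by apply/QRP; split; [exact: oner_neq0 | exists 1; rewrite mulr1]. Qed.

Lemma QR_sq x : x != 0 -> x * x \in R.
Proof. by move=> x0; apply/QRP; split; [rewrite mulf_neq0 | exists x]. Qed.

Lemma QR_div x y : x \in R -> x * y \in R -> y \in R.
Proof.
move=> xR xyR; have x0 := QR_neq0 xR.
by have := QR_mul (QR_inv xR) xyR; rewrite mulrA mulVf // mul1r.
Qed.


Variable A : {set F}.
Hypothesis hA : perfect_diff A R.

Lemma diff_uniq s a b c d : s \in R -> a \in A -> b \in A -> c \in A -> d \in A ->
  a - b = s -> c - d = s -> a = c /\ b = d.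
Proof.
move=> sR aA bA cA dA ab cd; have := hA.1 s sR; move/eqP/cards1P=> [x Ex].
have h1 : (a, b) \in [set xy : F * F | [&& xy.1 \in A, xy.2 \in A & xy.1 - xy.2 == s]].
  by rewrite inE /= aA bA ab eqxx.
have h2 : (c, d) \in [set xy : F * F | [&& xy.1 \in A, xy.2 \in A & xy.1 - xy.2 == s]].
  by rewrite inE /= cA dA cd eqxx.
rewrite Ex !inE in h1 h2; move/eqP: h1 => h1; move/eqP: h2 => h2.
by rewrite -h2 in h1; case: h1.
Qed.

Lemma diff_exists s : s \in R -> exists a b, [/\ a \in A, b \in A & a - b = s].
Proof.
move=> sR; have := hA.1 s sR; move/eqP/cards1P=> [x Ex].
have : x \in [set xy : F * F | [&& xy.1 \in A, xy.2 \in A & xy.1 - xy.2 == s]].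
  by rewrite Ex set11.
rewrite inE => /and3P[h1 h2 /eqP h3]; by exists x.1, x.2.
Qed.

Lemma QRm1 : -1 \in R.
Proof.
have [a [b [aA bA ab]]] := diff_exists QR1.
have ba : a != b by apply/eqP=> e; move: ab; rewrite e subrr => /eqP; rewrite eq_sym oner_eq0.
have := hA.2 _ _ bA aA; rewrite eq_sym => /(_ ba) h; by rewrite -opprB ab in h.
Qed.

Lemma two_neq0 : (2%:R : F) != 0.
Proof.
apply/eqP=> h2.
have [a [b [aA bA ab]]] := diff_exists QR1.
have h11 : (1 + 1 : F) == 0 by rewrite -[1 + 1]/(2%:R) h2.
have ba : b - a = 1 by rewrite -opprB ab; move: h11; rewrite addr_eq0 => /eqP <-.
have [e1 _] := diff_uniq QR1 aA bA bA aA ab ba.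
by move: ab; rewrite e1 subrr => /eqP; rewrite eq_sym oner_eq0.
Qed.


Lemma card_part (T J : finType) (P : pred T) (k : T -> J) :
  (\sum_(j : J) #|[set i | P i & k i == j]|)%N = #|[set i | P i]|.
Proof.
rewrite -sum1_card (partition_big k xpredT) //; apply: eq_bigr => j _.
by rewrite -sum1_card; apply: eq_bigl => i; rewrite !inE.
Qed.

Definition NR := [set x : F | (x != 0) && (x \notin R)].
Local Notation N := NR.

Lemma card_nz : #|[set x : F | x != 0]| = p.-1.
Proof.
have -> : [set x : F | x != 0] = [set~ 0] by apply/setP=> x; rewrite !inE.
by rewrite cardsC1 card_Fp.
Qed.

Lemma fiber u : u != 0 -> [set x : F | (x != 0) & x * x == u * u] = [set u; -u].
Proof.
move=> u0; apply/setP=> x; rewrite !inE; apply/idP/idP.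
  case/andP=> _ /eqP h; have : (x - u) * (x + u) == 0.
    have -> : (x - u) * (x + u) = x * x - u * u by ring.
    by rewrite h subrr.
  by rewrite mulf_eq0 subr_eq0 addr_eq0.
by case/orP=> /eqP ->; rewrite ?oppr_eq0 u0 ?mulrNN eqxx.
Qed.

Lemma card_QR2 : (2 * #|R|)%N = p.-1.
Proof.
rewrite -card_nz -(card_part (fun x : F => x != 0) (fun x => x * x)).
rewrite (bigID (fun y => y \in R)) /= addnC big1 ?add0n; last first.
  move=> y yR; apply/eqP; rewrite cards_eq0; apply/eqP/setP=> x; rewrite !inE.
  apply/negP=> /andP[x0 /eqP xy]; by move: yR; rewrite -xy (QR_sq x0).
rewrite mulnC -sum_nat_const; apply: eq_bigr => y /QRP[y0 [u yu]].
have u0 : u != 0 by apply: contraNneq y0 => u0; rewrite -yu u0 mul0r.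
rewrite -yu fiber // cards2.
suff -> : (u != - u) by [].
apply: contraNneq u0 => e.
have : u * 2%:R == 0 by rewrite mulr_natr mulr2n {1}e addNr.
by rewrite mulf_eq0 (negbTE two_neq0) orbF.
Qed.

Lemma inN x : (x \in N) = (x != 0) && (x \notin R).
Proof. by rewrite inE. Qed.

Lemma card_N : #|N| = #|R|.
Proof.
have -> : N = [set x : F | x != 0] :\: R by apply/setP=> x; rewrite !inE andbC.
rewrite cardsD.
have -> : [set x : F | x != 0] :&: R = R.
  by apply/setIidPr/subsetP=> x xR; rewrite inE QR_neq0.
by rewrite card_nz -card_QR2 mul2n -addnn addnK.
Qed.

Lemma RN r s : r \in R -> s \in N -> r * s \in N.
Proof.
move=> rR; rewrite !inN => /andP[s0 sR]; rewrite mulf_neq0 ?(QR_neq0 rR) //=.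
by apply: contra sR; apply: QR_div.
Qed.

Lemma N_onto s y : s \in N -> y \in N -> exists2 r, r \in R & y = s * r.
Proof.
move=> sN yN.
have s0 : s != 0 by move: sN; rewrite inN => /andP[].
have E : [set s * r | r in R] = N.
  apply/eqP; rewrite eqEcard card_imset; last exact: mulfI.
  rewrite card_N leqnn andbT; apply/subsetP=> x /imsetP[r rR ->].
  by rewrite mulrC RN.
by move: yN; rewrite -E => /imsetP[r rR ->]; exists r.
Qed.

Lemma NN s1 s2 : s1 \in N -> s2 \in N -> s1 * s2 \in R.
Proof.
move=> s1N s2N; have [r rR ->] := N_onto s1N s2N.
have s0 : s1 != 0 by move: s1N; rewrite inN => /andP[].
by rewrite mulrA QR_mul // QR_sq.
Qed.

Lemma N_exists : exists s, s \in N.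
Proof.
have : (0 < #|N|)%N by rewrite card_N; apply/card_gt0P; exists 1; exact: QR1.
by move/card_gt0P.
Qed.


Lemma card_R_pairs : #|R| = (#|A| * #|A| - #|A|)%N.
Proof.
pose D := setX A A :\: [set (a, a) | a in A].
have cD : #|D| = (#|A| * #|A| - #|A|)%N.
  rewrite cardsD cardsX; congr (_ - _)%N.
  have -> : setX A A :&: [set (a, a) | a in A] = [set (a, a) | a in A].
    apply/setIidPr/subsetP=> x /imsetP[a aA ->]; by rewrite inE /= aA.
  by rewrite card_imset // => a b [].
have E : [set ab.1 - ab.2 | ab in D] = R.
  apply/setP=> s; apply/imsetP/idP; last first.
    move=> sR; have [a [b [aA bA ab]]] := diff_exists sR.
    exists (a, b) => //; rewrite !inE /= aA bA /= andbT.
    apply/imsetP=> [[c _ [e1 e2]]]; move: ab; rewrite e1 e2 subrr => e0.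
    by move: (QR_neq0 sR); rewrite -e0 eqxx.
  move=> [[a b]] Hab E0; rewrite E0 /=; rewrite !inE /= in Hab; case/andP: Hab => nd /andP[aA bA].
  apply: (hA.2 a b aA bA); apply: contraNneq nd => ->; apply/imsetP; by exists b.
rewrite -cD -E card_in_imset //.
move=> [a b] [c d]; rewrite !inE /= => /andP[nd1 /andP[aA bA]] /andP[nd2 /andP[cA dA]] e.
have ab0 : a != b.
  by apply: contraNneq nd1 => ->; apply/imsetP; exists b.
have := diff_uniq (hA.2 _ _ aA bA ab0) aA bA cA dA erefl (esym e).
by case=> -> ->.
Qed.


Lemma le_card_inj (T : finType) (f : T -> T) (S1 S2 : {set T}) :
  injective f -> (forall i, i \in S1 -> f i \in S2) -> (#|S1| <= #|S2|)%N.
Proof.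
move=> fi h; rewrite -(card_imset S1 fi); apply: subset_leq_card.
by apply/subsetP=> x /imsetP[i iS ->]; apply: h.
Qed.

Definition cnt (x : F) :=
  #|[set ry : F * F | ((ry.1 \in R) && (ry.2 \in N)) & (ry.1 + ry.2 == x)]|.

Lemma cnt_le (u x : F) : u != 0 -> (cnt x <= cnt (u * x)%R)%N.
Proof.
move=> u0; case uR : (u \in R).
  apply: (le_card_inj (f := fun ry : F * F => (u * ry.1, u * ry.2))).
    by move=> [a b] [c d] /= /eqP; rewrite xpair_eqE => /andP[/eqP e1 /eqP e2]; rewrite (mulfI u0 e1) (mulfI u0 e2).
  move=> [r y]; rewrite inE /= => /andP[/andP[rR yN] /eqP <-]; rewrite inE /=.
  by rewrite QR_mul // RN //= mulrDr eqxx.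
have uN : u \in N by rewrite inN u0 uR.
apply: (le_card_inj (f := fun ry : F * F => (u * ry.2, u * ry.1))).
  by move=> [a b] [c d] /= /eqP; rewrite xpair_eqE => /andP[/eqP e1 /eqP e2]; rewrite (mulfI u0 e1) (mulfI u0 e2).
move=> [r y]; rewrite inE /= => /andP[/andP[rR yN] /eqP <-]; rewrite inE /=.
by rewrite NN // [in u * r \in N]mulrC RN //= mulrDr addrC eqxx.
Qed.

Lemma cnt_const x : x != 0 -> cnt x = cnt 1.
Proof.
move=> x0; apply/eqP; rewrite eqn_leq; apply/andP; split.
  by have := cnt_le x (invr_neq0 x0); rewrite mulVf.
by have := cnt_le 1 x0; rewrite mulr1.
Qed.

Lemma cnt0 : cnt 0 = 0%N.
Proof.
apply/eqP; rewrite cards_eq0; apply/eqP/setP=> [[r y]]; rewrite [in LHS]inE /= in_set0.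
apply/negP=> /andP[/andP[rR yN] /eqP ry].
have : y = -1 * r by rewrite mulN1r; apply/eqP; rewrite -addr_eq0 addrC ry.
by move=> ey; move: yN; rewrite inN ey QR_mul ?QRm1 ?andbF.
Qed.

Lemma sum_cnt : (\sum_(x : F) cnt x)%N = (#|R| * #|N|)%N.
Proof.
have := card_part (fun ry : F * F => (ry.1 \in R) && (ry.2 \in N)) (fun ry => ry.1 + ry.2).
rewrite /cnt => ->; rewrite -cardsX; congr #|_|; apply/setP=> [[r y]].
Qed.

Lemma cnt1_val : #|R| = (2 * cnt 1%R)%N.
Proof.
have h : (\sum_(x : F) cnt x)%N = (p.-1 * cnt 1%R)%N.
  rewrite (bigD1 0) //= cnt0 add0n.
  rewrite (eq_bigr (fun _ => cnt 1%R)); last by move=> x x0; rewrite cnt_const.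
  rewrite (eq_bigl (fun x => x \in [set x : F | x != 0])); last by move=> x; rewrite inE.
  by rewrite sum_nat_const card_nz.
rewrite sum_cnt card_N -card_QR2 in h.
have R0 : (0 < #|R|)%N by apply/card_gt0P; exists 1; exact: QR1.
nia.
Qed.


Section Field.
Variable K : fieldType.
Variable z : K.
Hypothesis zp : z ^+ p = 1.
Hypothesis z1 : z != 1.

Definition e (x : F) : K := z ^+ (nat_of_ord x).

Lemma e_nat i : e (i%:R) = z ^+ i.
Proof. by rewrite /e val_Fp_nat // expr_mod. Qed.

Lemma eD x y : e (x + y) = e x * e y.
Proof. by rewrite -[x]natr_Zp -[y]natr_Zp -natrD !e_nat exprD. Qed.

Lemma e0 : e 0 = 1.
Proof. by rewrite /e expr0. Qed.

Lemma sum_e1 : \sum_(x : F) e x = 0.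
Proof.
have h := subrX1 z (Zp_trunc (pdiv p)).+2.
have zN : z ^+ (Zp_trunc (pdiv p)).+2 = 1 by rewrite Fp_cast.
rewrite zN subrr in h.
have : (z - 1) * (\sum_(i < (Zp_trunc (pdiv p)).+2) z ^+ i) == 0 by rewrite -h.
rewrite mulf_eq0 subr_eq0 (negbTE z1) /= => /eqP S0.
exact: etrans S0.
Qed.

Lemma sum_e y : \sum_(t : F) e (t * y) = if y == 0 then p%:R else 0.
Proof.
case: eqP => [->|/eqP y0].
  rewrite (eq_bigr (fun _ => 1)); last by move=> t _; rewrite mulr0 e0.
  by rewrite sumr_const card_Fp.
by rewrite -(reindex_inj (mulIf y0) (P := xpredT) (F := e)) sum_e1.
Qed.

Lemma part_sum (T : finType) (P : pred T) (k : T -> F) (h : F -> K) :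
  \sum_(i | P i) h (k i) = \sum_(x : F) (#|[set i | P i & k i == x]|)%:R * h x.
Proof.
rewrite (partition_big k xpredT) //; apply: eq_bigr => x _.
rewrite (eq_bigr (fun _ => h x)); last by move=> i /andP[_ /eqP ->].
rewrite sumr_const mulr_natl; congr (_ *+ _).
by apply: eq_card => i; rewrite !inE.
Qed.

Definition f (t : F) : K := \sum_(a in A) e (t * a).

Lemma fprod u v w :
  \sum_(t : F) f (u * t) * f (v * t) * e (w * t) =
  p%:R * (#|[set ab : F * F | ((ab.1 \in A) && (ab.2 \in A)) & (u * ab.1 + v * ab.2 + w == 0)]|)%:R.
Proof.
have E t : f (u * t) * f (v * t) * e (w * t) =
    \sum_(ab | (ab.1 \in A) && (ab.2 \in A)) e (t * (u * ab.1 + v * ab.2 + w)).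
  rewrite -mulrA /f [X in _ * X]mulr_suml big_distrlr /=.
  rewrite pair_big /=; apply: eq_bigr => [[a b]] _ /=.
  have -> : t * (u * a + v * b + w) = u * t * a + v * t * b + w * t by ring.
  by rewrite !eD mulrA.
rewrite (eq_bigr _ (fun t _ => E t)) exchange_big /=.
rewrite (eq_bigr (fun ab : F * F => if u * ab.1 + v * ab.2 + w == 0 then p%:R else 0)); last first.
  by move=> ab _; rewrite -sum_e; apply: eq_bigr => t _; rewrite mulrC.
rewrite -big_mkcondr /= sumr_const mulr_natr; congr (_ *+ _).
by apply: eq_card => ab; rewrite !inE.
Qed.

Lemma f_step1 t : f t * f (- t) = (#|A|)%:R + \sum_(r in R) e (t * r).
Proof.
rewrite /f big_distrlr /=.
have E a : a \in A -> \sum_(b in A) e (t * a) * e (- t * b) =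
    1 + \sum_(b | (b \in A) && (b != a)) e (t * (a - b)).
  move=> aA; rewrite (bigD1 a) //= -eD; congr (_ + _).
    by have -> : t * a + - t * a = 0 by ring; rewrite e0.
  by apply: eq_bigr => b _; rewrite -eD; congr e; ring.
rewrite (eq_bigr _ E) big_split /= sumr_const; congr (_ + _).
rewrite pair_big_dep /= (part_sum _ (fun ab : F * F => ab.1 - ab.2) (fun x => e (t * x))).
rewrite [RHS]big_mkcond /=; apply: eq_bigr => x _.
case xR: (x \in R).
  set S := [set _ | _ & _].
  have -> : S = [set xy : F * F | [&& xy.1 \in A, xy.2 \in A & xy.1 - xy.2 == x]].
    apply/setP=> [[a b]]; rewrite !inE /=.
    case: (boolP (a - b == x)) => [/eqP abx|_]; last by rewrite !andbF.
    have ba : b != a by apply: contraNneq (QR_neq0 xR) => ba; rewrite -abx ba subrr.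
    by rewrite ba !andbT.
  by rewrite (hA.1 x xR) mul1r.
set S := [set _ | _ & _].
suff -> : S = set0 by rewrite cards0 mul0r.
apply/setP=> [[a b]]; rewrite !inE /=.
apply/negP=> /andP[/andP[aA /andP[bA ba]] /eqP abx].
by move: xR; rewrite -abx hA.2 // eq_sym.
Qed.

Definition G := \sum_(r in R) e r.
Definition G' := \sum_(y in N) e y.

Lemma gR t : t \in R -> \sum_(r in R) e (t * r) = G.
Proof.
move=> tR; have t0 := QR_neq0 tR.
rewrite /G [RHS](reindex_inj (mulfI t0)) /=; apply: eq_bigl => r.
apply/idP/idP => [|h]; first exact: QR_mul.
exact: QR_div h.
Qed.

Lemma gN t : t \in N -> \sum_(r in R) e (t * r) = G'.
Proof.
move=> tN; have t0 : t != 0 by move: tN; rewrite inN => /andP[].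
rewrite /G' [RHS](reindex_inj (mulfI t0)) /=; apply: eq_bigl => r.
apply/idP/idP => [rR|h]; first by rewrite mulrC RN.
case: (boolP (r \in R)) => // rR.
have r0 : r != 0 by apply: contraTneq h => ->; rewrite mulr0 inN eqxx.
have rN : r \in N by rewrite inN r0.
by move: h; rewrite inN NN ?andbF.
Qed.

Lemma sum_nz : \sum_(x | x != 0) e x = -1.
Proof.
have := sum_e1; rewrite (bigD1 0) //= e0 => /eqP; rewrite addrC addr_eq0 => /eqP.
done.
Qed.

Lemma GG'sum : G + G' = -1.
Proof.
rewrite -sum_nz (bigID (fun x => x \in R)) /=; congr (_ + _).
  by apply: eq_bigl => x; case: (boolP (x \in R)) => xR; rewrite ?andbT ?andbF // QR_neq0.
by apply: eq_bigl => x; rewrite inN andbC.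
Qed.

Lemma GG'prod : G * G' = - (cnt 1)%:R.
Proof.
rewrite /G /G' big_distrlr pair_big /=.
rewrite (eq_bigr (fun ry : F * F => e (ry.1 + ry.2))); last by move=> ry _; rewrite eD.
rewrite (part_sum _ (fun ry : F * F => ry.1 + ry.2) e).
rewrite (bigD1 0) //=.
have -> : #|[set i : F * F | (i.1 \in R) && (i.2 \in N) & i.1 + i.2 == 0]| = cnt 0 by [].
rewrite cnt0 mul0r add0r -mulrN1 -sum_nz mulr_sumr; apply: eq_bigr => x x0.
have -> : #|[set i : F * F | (i.1 \in R) && (i.2 \in N) & i.1 + i.2 == x]| = cnt x by [].
by rewrite cnt_const.
Qed.

Lemma key : ((#|A|)%:R + G) * ((#|A|)%:R + G') = (cnt 1%R)%:R.
Proof.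
have hn : (#|A| * #|A| = #|A| + 2 * cnt 1%R)%N.
  have := card_R_pairs; rewrite cnt1_val => h.
  have : (#|A| <= #|A| * #|A|)%N by case: #|A| => // k; rewrite leq_pmulr.
  lia.
have hK : ((#|A|)%:R : K) * (#|A|)%:R = (#|A|)%:R + 2%:R * (cnt 1%R)%:R.
  by rewrite -natrM hn natrD natrM.
transitivity ((#|A|)%:R * (#|A|)%:R + (#|A|)%:R * (G + G') + G * G' : K); first by ring.
rewrite GG'sum GG'prod hK; ring.
Qed.

Variable Q : nat.
Hypothesis frob : forall x y : K, (x + y) ^+ Q = x ^+ Q + y ^+ Q.
Hypothesis Q0 : (0 < Q)%N.
Hypothesis HQ : (Q%:R : F) = -1.

Lemma eQ x : e x ^+ Q = e (- x).
Proof.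
by rewrite /e -exprM -e_nat natrM natr_Zp HQ mulrN1.
Qed.

Lemma fQ t : f t ^+ Q = f (- t).
Proof.
rewrite /f (@big_morph _ _ (fun x : K => x ^+ Q) 0 +%R 0 +%R frob); last by rewrite expr0n eqn0Ngt Q0.
by apply: eq_bigr => a _; rewrite eQ mulNr.
Qed.

Lemma f_zero t : f t * f (- t) = 0 -> f t = 0.
Proof.
by rewrite -fQ -exprS => /eqP; rewrite expf_eq0 => /andP[_ /eqP].
Qed.

Hypothesis hpK : (p%:R : K) != 0.
Hypothesis c0 : ((cnt 1%R)%:R : K) = 0.
Hypothesis hlt : (#|A| * #|A| < p)%N.

Lemma main_contra : False.
Proof.
have hk := key; rewrite c0 in hk; move/eqP: hk; rewrite mulf_eq0 => hk.
have [s sN] := N_exists.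
have s0 : s != 0 by move: sN; rewrite inN => /andP[].
have H : forall t, t != 0 -> f (s * t) * f (-1 * t) = 0.
  move=> t t0; case/orP: hk => h.
    have fR r : r \in R -> f r = 0.
      by move=> rR; apply: f_zero; rewrite f_step1 gR //; apply/eqP.
    case: (boolP (t \in R)) => tR.
      by rewrite (fR (-1 * t)) ?mulr0 // QR_mul // QRm1.
    by rewrite fR ?mul0r // NN // inN t0 tR.
  have fN r : r \in N -> f r = 0.
    by move=> rN; apply: f_zero; rewrite f_step1 gN //; apply/eqP.
  case: (boolP (t \in R)) => tR.
    by rewrite fN ?mul0r // mulrC RN.
  by rewrite (fN (-1 * t)) ?mulr0 // RN ?QRm1 // inN t0 tR.
pose M x := #|[set ab : F * F | ((ab.1 \in A) && (ab.2 \in A)) & (s * ab.1 + -1 * ab.2 + - x == 0)]|.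
have f0 : f 0 = (#|A|)%:R.
  rewrite /f (eq_bigr (fun _ => 1)); last by move=> a _; rewrite mul0r e0.
  by rewrite sumr_const.
have hM x : p%:R * (M x)%:R = (#|A|)%:R * (#|A|)%:R :> K.
  rewrite -fprod (bigD1 0) //= big1 ?addr0; last first.
    by move=> t t0; rewrite H // mul0r.
  by rewrite !mulr0 e0 mulr1 f0.
have [a1 [b1 [a1A _ _]]] := diff_exists QR1.
have M1 : M (s * a1 - a1) = 1%N.
  apply/eqP/cards1P; exists (a1, a1); apply/setP=> [[a b]]; rewrite !inE /=.
  apply/idP/idP; last first.
    by move=> /eqP [-> ->]; rewrite a1A /=; apply/eqP; ring.
  move=> /andP[/andP[aA bA] /eqP h].
  have h' : s * (a - a1) = b - a1.
    apply/eqP; rewrite -subr_eq0; apply/eqP; rewrite -h; ring.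
  case: (eqVneq a a1) => [ea|na].
    move: h'; rewrite ea subrr mulr0 => /eqP; rewrite eq_sym subr_eq0 => /eqP ->.
    by [].
  have aR : a - a1 \in R by apply: hA.2.
  have nb : b != a1.
    apply/eqP => eb; move: h'; rewrite eb subrr => /eqP.
    by rewrite mulf_eq0 (negbTE s0) /= subr_eq0 (negbTE na).
  have bR : b - a1 \in R by apply: hA.2.
  move: sN; rewrite inN (QR_div aR) ?andbF //.
  by rewrite mulrC h'.
have hM1 := hM (s * a1 - a1); rewrite M1 mulr1 in hM1.
have Mpos x : (0 < M x)%N.
  rewrite lt0n; apply/eqP=> Mx0.
  have := hM x; rewrite Mx0 mulr0 -hM1 => /eqP; rewrite eq_sym.
  by rewrite (negbTE hpK).
have sub : [set: F] \subset [set s * ab.1 - ab.2 | ab in setX A A].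
  apply/subsetP=> x _; have /card_gt0P [[a b]] := Mpos x.
  rewrite !inE /= => /andP[/andP[aA bA] /eqP h].
  apply/imsetP; exists (a, b); first by rewrite inE /= aA bA.
  by apply/eqP; rewrite eq_sym -subr_eq0; apply/eqP; rewrite -h /=; ring.
have := subset_leq_card sub; rewrite cardsT card_Fp //.
move=> h; have := leq_trans h (leq_imset_card _ _); rewrite cardsX.
by rewrite leqNgt hlt.
Qed.

End Field.
End Comb.

Local Close Scope ring_scope.

Lemma sqm1 x : (0 < x)%N -> (x * x - 1 = x.-1 * x.+1)%N.
Proof. case: x => // x _ /=. nia. Qed.

Theorem theorem4 (p : nat) (hp : prime p) :
  (exists A : {set 'F_p}, perfect_diff A (QR p)) ->
  forall q : nat, prime q -> (q %| (p - 1) %/ 4)%N ->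
  forall k : nat, is_mult_order p q k -> odd k.
Proof.
move=> [A hA] q hq hqd k [k0 qk kmin].
case: (boolP (odd k)) => // ek; exfalso.
have p1 : (1 < p)%N := prime_gt1 hp.
have q1 : (1 < q)%N := prime_gt1 hq.
have c2 := cnt1_val hp hA.
have r2 := card_QR2 hp hA.
have rp := card_R_pairs hA.
set c := cnt 1%R in c2.
have R0 : (0 < #|QR p|)%N by apply/card_gt0P; exists 1%R; exact: QR1.
have hc : (p - 1) %/ 4 = c.
  have -> : (p - 1 = c * 4)%N by lia.
  by rewrite mulnK.
rewrite hc in hqd.
have c0 : (0 < c)%N by lia.
have qc : (q <= c)%N by apply: dvdn_leq.
have nqp : ~~ (q %| p)%N.
  apply/negP=> /(prime_nt_dvdP hp) h.
  have : q = p by apply: h; rewrite eqn_leq leqNgt q1.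
  lia.
have hlt : (#|A| * #|A| < p)%N by nia.
set j := k./2.
have kj : k = (j + j)%N by rewrite addnn -[k]odd_double_half (negbTE ek).
have j0 : (0 < j)%N by move: k0; rewrite kj addnn double_gt0.
set Q := (q ^ j)%N.
have Q0 : (0 < Q)%N by rewrite expn_gt0 prime_gt0.
have pQ : (p %| Q.+1)%N.
  have hQQ : (Q * Q = 1 %[mod p])%N by rewrite -expnD -kj.
  have : (p %| Q * Q - 1)%N by rewrite -eqn_mod_dvd ?hQQ // muln_gt0 Q0.
  rewrite sqm1 // Euclid_dvdM // => /orP[h|//].
  have : (Q = 1 %[mod p])%N by apply/eqP; rewrite eqn_mod_dvd // subn1.
  move=> /(kmin j j0); rewrite kj leqNgt -{1}(addn0 j) ltn_add2l j0.
  done.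
have HQ : (Q%:R : 'F_p)%R = (-1)%R.
  have : (Q.+1%:R : 'F_p)%R = 0%R by apply/eqP; rewrite -(dvdn_pcharf (pchar_Fp hp)).
  by rewrite mulrSr => /eqP; rewrite addr_eq0 => /eqP.
have [Fm chFm cardFm] := pPrimePowerField hq k0.
set n0 := (q ^ k).-1.
have pn0 : (p %| n0)%N.
  rewrite /n0 -subn1 -eqn_mod_dvd; last by rewrite expn_gt0 prime_gt0.
  by apply/eqP.
have n0pos : (0 < n0)%N.
  rewrite /n0 -subn1 subn_gt0; apply: (leq_trans q1); rewrite -{1}(expn1 q) leq_exp2l //.
set rs := enum [set x : Fm | x != 0%R].
have hrs : has (n0.-primitive_root)%R rs.
  apply: has_prim_root => //.
  - apply/allP=> x; rewrite mem_enum inE => x0; rewrite unity_rootE.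
    have h := expf_card x; rewrite cardFm in h.
    have e1 : (q ^ k)%N = n0.+1 by rewrite /n0 prednK // expn_gt0 prime_gt0.
    rewrite e1 exprS in h; apply/eqP; apply: (mulfI x0); by rewrite mulr1.
  - exact: enum_uniq.
  - rewrite -cardE.
    have -> : [set x : Fm | x != 0%R] = [set~ 0%R] by apply/setP=> x; rewrite !inE.
    by rewrite cardsC1 cardFm.
case/hasP: hrs => w _ pw.
pose z := (w ^+ (n0 %/ p))%R.
have zp : (z ^+ p = 1)%R.
  by rewrite /z -exprM divnK // prim_expr_order.
have z1 : (z != 1)%R.
  rewrite /z -(prim_order_dvd pw); apply/negP=> /dvdn_leq.
  have pl : (p <= n0)%N by apply: dvdn_leq.
  rewrite divn_gt0 ?prime_gt0 // pl => /(_ isT).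
  by rewrite leqNgt ltn_Pdiv.
have frob : forall x y : Fm, ((x + y) ^+ Q = x ^+ Q + y ^+ Q)%R.
  move=> x y; apply: exprDn_pchar.
  by rewrite /Q pnatX (eq_pnat _ (pcharf_eq chFm)) pnat_id.
have hpK : (p%:R : Fm)%R != 0%R by rewrite -(dvdn_pcharf chFm).
have cK : (c%:R : Fm)%R = 0%R by apply/eqP; rewrite -(dvdn_pcharf chFm).
exact: (main_contra hp hA zp z1 frob Q0 HQ hpK cK hlt).
Qed.
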